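(* Assume (H1) and (H3). For any compact set $K\subset\mathbb R\setminus\{0\}$ there exist constants $c_K>0$ and $c_K'>0$ such that for every $n\geqslant1$, \[ \sup_{t\in K}\|\mathbf P_t^n\|_{\mathscr C\to\mathscr C}\leqslant c_Ke^{-c_K'n}. \]
   Context: $\mathbb X$ is a finite set, $\mathbf P$ a Markov transition matrix on $\mathbb X$, $f:\mathbb X\to\mathbb R$. $\mathscr C$ is the space of complex functions on $\mathbb X$ with $\|g\|_\infty=\max_x|g(x)|$, and for an operator $R$ on $\mathscr C$, $\|R\|_{\mathscr C\to\mathscr C}=\sup_{g\neq0}\|Rg\|_\infty/\|g\|_\infty$. (H1): there exists $k_0\geqslant1$ such that $\mathbf P^{k_0}g(x)>0$ for all $x$ and every non-negative, not identically zero $g$. (H3): for every $(\theta,a)\in\mathbb R^2$ there exist $n\geqslant0$ and $x_0,\dots,x_n$ with $\mathbf P(x_0,x_1)\cdots\mathbf P(x_{n-1},x_n)\mathbf P(x_n,x_0)>0$ and $f(x_0)+\dots+f(x_n)-(n+1)\theta\notin a\mathbb Z$. For $t\in\mathbb R$, $\mathbf P_tg(x)=\sum_{x'}e^{itf(x')}g(x')\mathbf P(x,x')$. *)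

(* Defs.v *)
From HB Require Import structures.
From mathcomp Require Import all_boot all_order all_algebra.
From mathcomp Require Import all_classical all_reals all_analysis.
From mathcomp Require Import complex.
Set Implicit Arguments. Unset Strict Implicit. Unset Printing Implicit Defensive.
Import Order.TTheory GRing.Theory Num.Theory numFieldNormedType.Exports.
Local Open Scope ring_scope.
Local Open Scope classical_set_scope.

Section Defs.
Variable R : realType.
Variable X : finType.

Definition cmod (z : R[i]) : R := ComplexField.Normc.normc z.

Definition expi (theta : R) : R[i] := Complex (cos theta) (sin theta).

Definition markov_matrix (P : X -> X -> R) : Prop :=
  (forall x y, 0 <= P x y) /\ (forall x, \sum_(y : X) P x y = 1).

Definition Pop (P : X -> X -> R) (g : X -> R) : X -> R :=
  fun x => \sum_(x' : X) P x x' * g x'.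

Definition H1 (P : X -> X -> R) : Prop :=
  exists k0 : nat, (1 <= k0)%N /\
    forall g : X -> R, (forall x, 0 <= g x) -> (exists x, g x != 0) ->
      forall x, 0 < iter k0 (Pop P) g x.

Definition H3 (P : X -> X -> R) (f : X -> R) : Prop :=
  forall theta a : R, exists (n : nat) (xs : nat -> X),
    0 < (\prod_(i < n) P (xs i) (xs i.+1)) * P (xs n) (xs 0%N) /\
    ~ (exists k : int, \sum_(i < n.+1) f (xs i) - n.+1%:R * theta = a * k%:~R).

Definition Pt (P : X -> X -> R) (f : X -> R) (t : R) (g : X -> R[i]) : X -> R[i] :=
  fun x => \sum_(x' : X) expi (t * f x') * g x' * ((P x x')%:C)%C.

Definition supnorm (g : X -> R[i]) : R := \big[Order.max/0]_(x : X) cmod (g x).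

Definition opnorm (Op : (X -> R[i]) -> (X -> R[i])) : R :=
  sup [set r | exists g : X -> R[i], (exists x, g x != 0) /\
                 r = supnorm (Op g) / supnorm g].

End Defs.

(* Main.v *)
Set Warnings "-all".
Set Implicit Arguments. Unset Strict Implicit. Unset Printing Implicit Defensive.
Require Import Defs.
From HB Require Import structures.
From mathcomp Require Import all_boot all_order all_algebra.
From mathcomp Require Import all_classical all_reals all_analysis.
From mathcomp Require Import complex.
From mathcomp Require Import ring lra.
Import Order.TTheory GRing.Theory Num.Theory numFieldNormedType.Exports.
Local Open Scope ring_scope.
Local Open Scope classical_set_scope.

Section Kernel.
Variable X : finType.
Variable V : comNzRingType.

Definition Kop (k : X -> X -> V) (g : X -> V) : X -> V :=
  fun x => \sum_(x' : X) k x x' * g x'.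
Definition ind (y : X) : X -> V := fun x => (x == y)%:R.
Definition Qk k m x y := iter m (Kop k) (ind y) x.

Lemma ind_sum (g : X -> V) x : \sum_y ind y x * g y = g x.
Proof.
rewrite (bigD1 x) //= big1 ?addr0; first by rewrite /ind eqxx mul1r.
by move=> y /negbTE; rewrite /ind eq_sym => ->; rewrite mul0r.
Qed.

Lemma Kop_rep k m g x : iter m (Kop k) g x = \sum_y Qk k m x y * g y.
Proof.
elim: m x => [|m IH] x /=.
  by rewrite /Qk /= ind_sum.
rewrite /Kop /=.
under eq_bigr => x' _ do rewrite IH big_distrr.
rewrite exchange_big /=; apply: eq_bigr => y _.
rewrite /Qk /= /Kop big_distrl /=; apply: eq_bigr => w _.
by rewrite mulrA.
Qed.

Lemma QkS k m x y : Qk k m.+1 x y = \sum_w k x w * Qk k m w y.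
Proof. by []. Qed.

Lemma Qk_add k a b x y : Qk k (a + b) x y = \sum_w Qk k a x w * Qk k b w y.
Proof. by rewrite /Qk iterD Kop_rep. Qed.

Lemma Qk1 k x y : Qk k 1 x y = k x y.
Proof.
rewrite QkS (bigD1 y) //= big1 ?addr0.
  by rewrite /Qk /= /ind eqxx mulr1.
by move=> w /negbTE; rewrite /Qk /= /ind => ->; rewrite mulr0.
Qed.

Lemma QkSr k m x y : Qk k m.+1 x y = \sum_w Qk k m x w * k w y.
Proof.
rewrite -addn1 Qk_add; apply: eq_bigr => w _; by rewrite Qk1.
Qed.

End Kernel.
Section Cmod.
Variable R : realType.
Local Open Scope complex_scope.
Implicit Types z w : R[i].

Lemma cmodE z : (cmod z)%:C = `|z|. Proof. by []. Qed.
Lemma cmod_le z w : (cmod z <= cmod w) = (`|z| <= `|w|).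
Proof. by rewrite -lecR. Qed.
Lemma cmod_ge0 z : 0 <= cmod z.
Proof. by case: z => a b; rewrite /cmod /=; apply: sqrtr_ge0. Qed.
Lemma cmodM z w : cmod (z * w) = cmod z * cmod w.
Proof. exact: ComplexField.Normc.normcM. Qed.
Lemma cmodR (r : R) : cmod r%:C = `|r|.
Proof. apply: complexI; rewrite cmodE. by rewrite normc_def /= expr0n /= addr0 sqrtr_sqr. Qed.
Lemma cmodD z w : cmod (z + w) <= cmod z + cmod w.
Proof. by rewrite -lecR rmorphD /= !cmodE ler_normD. Qed.
Lemma cmodB z w : cmod (z - w) = cmod (w - z).
Proof. by apply: complexI; rewrite !cmodE distrC. Qed.
Lemma cmod_sum (I : finType) (F : I -> R[i]) :
  cmod (\sum_i F i) <= \sum_i cmod (F i).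
Proof.
rewrite -lecR cmodE rmorph_sum /=.
under [X in _ <= X]eq_bigr => i _ do rewrite cmodE.
exact: ler_norm_sum.
Qed.
Lemma cmod_expi (a : R) : cmod (expi a) = 1.
Proof.
by rewrite /cmod /expi /ComplexField.Normc.normc cos2Dsin2 sqrtr1.
Qed.
End Cmod.

Section Trig.
Variable R : realType.
Local Open Scope complex_scope.

Lemma expiD (a b : R) : expi a * expi b = expi (a + b).
Proof.
rewrite /expi cosD sinD; apply/eqP; rewrite eq_complex /=; apply/andP; split;
  apply/eqP; ring.
Qed.

Lemma expi0 : expi (0 : R) = 1.
Proof. by rewrite /expi cos0 sin0. Qed.

Lemma expiX (a : R) k : expi a ^+ k = expi (a *+ k).
Proof.
elim: k => [|k IH]; first by rewrite expr0 mulr0n expi0.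
by rewrite exprS IH expiD mulrS.
Qed.

Lemma expi_neq0 (a : R) : expi a != 0.
Proof.
apply/negP => /eqP H; have := cmod_expi a; rewrite H.
by rewrite /cmod /ComplexField.Normc.normc /= expr0n /= addr0 sqrtr0 => /eqP; rewrite eq_sym oner_eq0.
Qed.

Lemma cos_periodn (x : R) n : cos (x + pi *+ 2 *+ n) = cos x.
Proof. exact: (periodicn (@cosD2pi R)). Qed.

Lemma cos_int (x : R) (z : int) : cos (x + pi *+ 2 * z%:~R) = cos x.
Proof.
have key m : cos (x - pi *+ 2 * m%:R) = cos x.
  by rewrite -(cos_periodn (x - _) m) mulr_natr subrK.
case: z => m; first by rewrite -pmulrn mulr_natr cos_periodn.
by rewrite NegzE intrN mulrN -pmulrn key.
Qed.

Lemma cos_eq1 (u : R) : cos u = 1 -> exists k : int, u = pi *+ 2 * k%:~R.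
Proof.
move=> Hu.
have pi2 : 0 < pi *+ 2 :> R by rewrite pmulrn_rgt0 // pi_gt0.
set k := Num.floor (u / (pi *+ 2)).
have /andP[k1 k2] := floor_itv (u / (pi *+ 2)); rewrite -/k in k1 k2.
set v := u - pi *+ 2 * k%:~R.
have v0 : 0 <= v.
  by rewrite subr_ge0 mulrC -ler_pdivlMr.
have v2 : v < pi *+ 2.
  by move: k2; rewrite ltr_pdivrMr // intrD mulrDl mul1r /v (mulrC (k%:~R)); lra.
have cv : cos v = 1.
  by rewrite -Hu /v -mulrN -intrN cos_int.
exists k; apply/eqP; rewrite -subr_eq0 -/v.
have [vpi|vpi] := leP v pi.
  have := @cosK R v; rewrite in_itv /= v0 vpi => /(_ isT); rewrite cv acos1 => <-.
  by [].
exfalso.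
have w0 : 0 <= pi *+ 2 - v <= pi.
  rewrite subr_ge0 (ltW v2) /= lerBlDr mulr2n lerD2l; exact: ltW.
have := @cosK R (pi *+ 2 - v); rewrite in_itv /= w0 => /(_ isT).
rewrite addrC (cosD2pi (- v)) cosN cv acos1 => /eqP; rewrite eq_sym addrC subr_eq0 => /eqP H.
by move: v2; rewrite -H ltxx.
Qed.

Lemma expi_eq1 (u : R) : expi u = 1 -> cos u = 1.
Proof. by move=> /eqP; rewrite eq_complex /= => /andP[/eqP ->]. Qed.

Lemma cmod1_expi (c : R[i]) : cmod c = 1 -> exists a : R, c = expi a.
Proof.
case: c => a b; rewrite /cmod /ComplexField.Normc.normc /= => H.
have H2 : a ^+ 2 + b ^+ 2 = 1.
  by rewrite -[LHS]sqr_sqrtr ?addr_ge0 ?sqr_ge0 // H expr1n.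
have ha : -1 <= a <= 1.
  rewrite -ler_norml -(ler_pXn2r (n:=2)) ?nnegrE ?normr_ge0 // real_normK ?num_real //.
  by rewrite expr1n -H2 lerDl sqr_ge0.
have sb : Num.sqrt (1 - a ^+ 2) = `|b|.
  by rewrite -H2 addrC addKr sqrtr_sqr.
have [b0|b0] := leP 0 b.
  exists (acos a); rewrite /expi acosK ?in_itv //= sin_acos // sb ger0_norm //.
exists (- acos a); rewrite /expi cosN sinN acosK ?in_itv //= sin_acos // sb ltr0_norm //.
by rewrite opprK.
Qed.

End Trig.

Section Lip.
Variable R : realType.
Local Open Scope complex_scope.

Lemma lip_gen (g dg : R -> R) : (forall x, is_derive x (1:R) g (dg x)) ->
  (forall x, `|dg x| <= 1) -> continuous g ->
  forall a b, `|g a - g b| <= `|a - b|.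
Proof.
move=> Hd Hb Hc.
have key a b : a < b -> `|g a - g b| <= `|a - b|.
  move=> ab; have [c _ E] := MVT ab (fun x _ => Hd x) (continuous_subspaceT Hc).
  rewrite distrC E [X in _ <= X]distrC normrM.
  by rewrite -[X in _ <= X]mul1r ler_wpM2r.
move=> a b; have [ab|ba|->] := ltgtP a b.
- exact: key.
- by rewrite distrC [X in _ <= X]distrC key.
- by rewrite !subrr normr0.
Qed.

Lemma lip_sin (a b : R) : `|sin a - sin b| <= `|a - b|.
Proof. apply: (@lip_gen sin cos); [exact: cos_max | exact: continuous_sin]. Qed.
Lemma lip_cos (a b : R) : `|cos a - cos b| <= `|a - b|.
Proof.
apply: (@lip_gen cos (fun x => - sin x)); [move=> x; rewrite normrN; exact: sin_max | exact: continuous_cos].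
Qed.

Lemma cmod_cplx (x y : R) : cmod (Complex x y) <= `|x| + `|y|.
Proof.
have -> : Complex x y = x%:C + Complex 0 y by apply/eqP; rewrite eq_complex /= addr0 add0r !eqxx.
apply: le_trans (cmodD _ _) _; rewrite cmodR lerD2l.
by rewrite /cmod /ComplexField.Normc.normc expr0n /= add0r sqrtr_sqr.
Qed.

Lemma lip_expi (a b : R) : cmod (expi a - expi b) <= 2 * `|a - b|.
Proof.
have -> : expi a - expi b = Complex (cos a - cos b) (sin a - sin b).
  by apply/eqP; rewrite eq_complex /= !eqxx.
apply: le_trans (cmod_cplx _ _) _; rewrite mulr2n mulrDl mul1r.
by apply: lerD; [exact: lip_cos | exact: lip_sin].
Qed.

End Lip.

Section Main.
Variable R : realType.
Variable X : finType.
Variable P : X -> X -> R.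
Variable f : X -> R.
Hypothesis HP : markov_matrix P.
Local Open Scope complex_scope.

Definition kt (t : R) (x x' : X) : R[i] := expi (t * f x') * (P x x')%:C.
Lemma Pt_Kop t : Pt P f t = Kop (kt t).
Proof.
apply: funext => g; apply: funext => x; rewrite /Pt /Kop /kt.
by apply: eq_bigr => x' _; rewrite mulrAC.
Qed.
Definition Qt t m x y := Qk (kt t) m x y.
Definition Pm m x y : R := Qk P m x y.

Lemma P_ge0 x y : 0 <= P x y. Proof. by case: HP. Qed.
Lemma P_sum x : \sum_y P x y = 1. Proof. by case: HP. Qed.

Lemma Pm_ge0 m x y : 0 <= Pm m x y.
Proof.
elim: m x => [|m IH] x; first by rewrite /Pm /Qk /= /ind ler0n.
rewrite /Pm QkS; apply: sumr_ge0 => w _; apply: mulr_ge0 => //; exact: P_ge0.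
Qed.

Lemma iter_Pop1 m : iter m (Kop P) (fun _ => 1) = (fun _ => 1).
Proof.
elim: m => [|m IH] //=; rewrite IH; apply: funext => x; rewrite /Kop.
under eq_bigr do rewrite mulr1. exact: P_sum.
Qed.

Lemma Pm_sum m x : \sum_y Pm m x y = 1.
Proof.
have H := Kop_rep P m (fun _ => 1) x; rewrite iter_Pop1 /= in H.
rewrite [RHS]H; apply: eq_bigr => y _; by rewrite mulr1.
Qed.

Lemma Pm_le1 m x y : Pm m x y <= 1.
Proof.
rewrite -(Pm_sum m x) (bigD1 y) //= lerDl; apply: sumr_ge0 => *; exact: Pm_ge0.
Qed.

Lemma cmod_kt t x w : cmod (kt t x w) = P x w.
Proof. by rewrite cmodM cmod_expi mul1r cmodR ger0_norm // P_ge0. Qed.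

Lemma Qt_le t m x y : cmod (Qt t m x y) <= Pm m x y.
Proof.
elim: m x => [|m IH] x.
  by rewrite /Qt /Pm /Qk /= /ind; case: (x == y); rewrite ?cmodR ?normr1 ?normr0.
rewrite /Qt /Pm !QkS; apply: le_trans (cmod_sum _) _; apply: ler_sum => w _.
rewrite cmodM cmod_kt; apply: ler_wpM2l; [exact: P_ge0| exact: IH].
Qed.

Definition rho t m x := \sum_y cmod (Qt t m x y).

Lemma rho_le1 t m x : rho t m x <= 1.
Proof. rewrite -(Pm_sum m x); apply: ler_sum => y _; exact: Qt_le. Qed.

Lemma rho_ge0 t m x : 0 <= rho t m x.
Proof. apply: sumr_ge0 => *; exact: cmod_ge0. Qed.

Lemma rho_mono t a b x : rho t (a + b) x <= rho t a x.
Proof.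
rewrite /rho /Qt.
under eq_bigr do rewrite Qk_add.
apply: le_trans (_ : \sum_y \sum_w cmod (Qk (kt t) a x w) * cmod (Qk (kt t) b w y) <= _).
  apply: ler_sum => y _; apply: le_trans (cmod_sum _) _.
  by apply: ler_sum => w _; rewrite cmodM.
rewrite exchange_big /=; apply: ler_sum => w _.
rewrite -mulr_sumr; apply: ler_piMr; first exact: cmod_ge0.
exact: rho_le1.
Qed.


Lemma supnorm_ge (g : X -> R[i]) x : cmod (g x) <= supnorm g.
Proof. by rewrite /supnorm (bigD1 x) //= le_max lexx. Qed.

Lemma supnorm_le (g : X -> R[i]) B : 0 <= B -> (forall x, cmod (g x) <= B) ->
  supnorm g <= B.
Proof.
move=> B0 H; rewrite /supnorm; apply: (big_ind (fun v => v <= B)) => //.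
by move=> a b Ha Hb; rewrite ge_max Ha Hb.
Qed.

Lemma supnorm_ge0 (g : X -> R[i]) : 0 <= supnorm g.
Proof.
rewrite /supnorm; apply: (big_ind (fun v => 0 <= v)) => //.
- by move=> a b Ha Hb; rewrite le_max Ha.
- by move=> *; apply: cmod_ge0.
Qed.

Lemma iter_bound t m B g : 0 <= B -> (forall x, rho t m x <= B) ->
  supnorm (iter m (Pt P f t) g) <= B * supnorm g.
Proof.
move=> B0 HB; apply: supnorm_le => [|x]; first exact: mulr_ge0 (supnorm_ge0 _).
rewrite Pt_Kop Kop_rep; apply: le_trans (cmod_sum _) _.
apply: le_trans (_ : \sum_y cmod (Qt t m x y) * supnorm g <= _).
  apply: ler_sum => y _; rewrite cmodM; apply: ler_wpM2l; first exact: cmod_ge0.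
  exact: supnorm_ge.
rewrite -mulr_suml; apply: ler_wpM2r; [exact: supnorm_ge0 | exact: HB].
Qed.

Lemma iter_le1 t m g : supnorm (iter m (Pt P f t) g) <= supnorm g.
Proof.
rewrite -[X in _ <= X]mul1r; apply: iter_bound => // x; exact: rho_le1.
Qed.

Lemma iter_geom t M q g n : 0 <= q -> (forall x, rho t M x <= q) ->
  supnorm (iter n (Pt P f t) g) <= q ^+ (n %/ M)%N * supnorm g.
Proof.
move=> q0 Hq.
rewrite {1}(div.divn_eq n M) addnC iterD.
apply: le_trans (iter_le1 _ _ _) _.
elim: (n %/ M)%N => [|k IH]; first by rewrite mul0n /= expr0 mul1r.
rewrite mulSn iterD exprS -mulrA.
have H := iter_bound (iter (k * M) (Pt P f t) g) q0 Hq.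
apply: le_trans H _.
by apply: ler_wpM2l.
Qed.


Definition Fsum := \sum_w `|f w|.
Lemma Fsum_ge0 : 0 <= Fsum. Proof. apply: sumr_ge0 => *; exact: normr_ge0. Qed.
Lemma f_le_Fsum w : `|f w| <= Fsum.
Proof. rewrite /Fsum (bigD1 w) //= lerDl; apply: sumr_ge0 => *; exact: normr_ge0. Qed.

Lemma kt_lip s t x w : cmod (kt s x w - kt t x w) <= P x w * (2 * Fsum * `|s - t|).
Proof.
rewrite /kt -mulrBl cmodM cmodR ger0_norm ?P_ge0 // mulrC.
apply: ler_wpM2l; first exact: P_ge0.
apply: le_trans (lip_expi _ _) _; rewrite -mulrA ler_wpM2l // -mulrBl normrM mulrC.
by apply: ler_wpM2r; [exact: normr_ge0 | exact: f_le_Fsum].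
Qed.

Lemma Qt_lip s t m x y :
  cmod (Qt s m x y - Qt t m x y) <= m%:R * (2 * Fsum * `|s - t|).
Proof.
elim: m x => [|m IH] x.
  by rewrite /Qt /Qk /= subrr mul0r /cmod /ComplexField.Normc.normc /= expr0n /= addr0 sqrtr0.
rewrite /Qt !QkS -sumrB.
apply: le_trans (cmod_sum _) _.
apply: le_trans (_ : \sum_w (P x w * (2 * Fsum * `|s - t|) + P x w * (m%:R * (2 * Fsum * `|s - t|))) <= _).
  apply: ler_sum => w _.
  have -> : kt s x w * Qk (kt s) m w y - kt t x w * Qk (kt t) m w y =
    (kt s x w - kt t x w) * Qk (kt s) m w y + kt t x w * (Qk (kt s) m w y - Qk (kt t) m w y).
    by ring.
  apply: le_trans (cmodD _ _) _; apply: lerD.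
    rewrite cmodM; apply: le_trans (_ : P x w * (2 * Fsum * `|s - t|) * 1 <= _); last by rewrite mulr1.
    apply: ler_pM; [exact: cmod_ge0 | exact: cmod_ge0 | exact: kt_lip |].
    apply: le_trans (Qt_le _ _ _ _) _; exact: Pm_le1.
  rewrite cmodM cmod_kt; apply: ler_wpM2l; [exact: P_ge0 | exact: IH].
rewrite big_split /= -!mulr_suml P_sum !mul1r.
by rewrite -[m.+1]add1n natrD [(1 + m%:R) * _]mulrDl mul1r.
Qed.

Lemma rho_lip s t m x :
  rho s m x <= rho t m x + (m%:R * (2 * Fsum * `|s - t|)) *+ #|X|.
Proof.
rewrite /rho -sumr_const -big_split /=; apply: ler_sum => y _.
have -> : Qt s m x y = Qt t m x y + (Qt s m x y - Qt t m x y) by rewrite addrC subrK.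
apply: le_trans (cmodD _ _) _; rewrite lerD2l; exact: Qt_lip.
Qed.


Lemma sum_gt0_ex (F : X -> R) : 0 < \sum_i F i -> exists i, 0 < F i.
Proof.
move=> H; apply: contrapT => Hn; move: H; apply/negP; rewrite -leNgt.
apply: sumr_le0 => i _; rewrite leNgt; apply/negP => Hi; apply: Hn; by exists i.
Qed.

Lemma sum_gt0_of (F : X -> R) i : (forall j, 0 <= F j) -> 0 < F i -> 0 < \sum_j F j.
Proof.
move=> H0 Hi; rewrite (bigD1 i) //=; apply: lt_le_trans (_ : F i + 0 <= _).
  by rewrite addr0.
by rewrite lerD2l; apply: sumr_ge0.
Qed.

Lemma mul_gt0_l (a b : R) : 0 <= a -> 0 <= b -> 0 < a * b -> 0 < a /\ 0 < b.
Proof.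
move=> a0 b0 H; split; rewrite lt_def ?a0 ?b0 andbT; apply/negP => /eqP E;
  by move: H; rewrite E ?mul0r ?mulr0 ltxx.
Qed.

Lemma prod_factor_gt0 n (F : 'I_n -> R) : (forall i, 0 <= F i) ->
  0 < \prod_(i < n) F i -> forall i, 0 < F i.
Proof.
move=> H0 H i; rewrite lt_def H0 andbT; apply/negP => /eqP E.
by move: H; rewrite (bigD1 i) //= E mul0r ltxx.
Qed.

Lemma Pm_pos_L L : (forall w y, 0 < Pm L w y) ->
  forall m w y, (L <= m)%N -> 0 < Pm m w y.
Proof.
move=> HL m w y Lm; rewrite -(subnK Lm) /Pm Qk_add.
have [v Hv] : exists v, 0 < Pm (m - L) w v.
  by apply: sum_gt0_ex; rewrite Pm_sum ltr01.
apply: (sum_gt0_of (i := v)) => [j|]; last exact: mulr_gt0.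
apply: mulr_ge0; exact: Pm_ge0.
Qed.


Section Key.
Variables (t : R) (x : X) (L : nat).
Hypothesis PL : forall w y, 0 < Pm L w y.
Hypothesis Heq : forall m y, cmod (Qt t m x y) = Pm m x y.

Definition Phi m y := Qt t m x y / (Pm m x y)%:C.
Let e z := expi (t * f z).

Lemma realC_neq0 (a : R) : a != 0 -> a%:C != 0 :> R[i].
Proof. by move=> a0; apply/eqP => -[E]; rewrite E eqxx in a0. Qed.

Lemma PmC_neq0 m y : (L <= m)%N -> (Pm m x y)%:C != 0.
Proof. by move=> Lm; apply: realC_neq0; rewrite gt_eqF // (Pm_pos_L PL x y Lm). Qed.

Lemma cmod_inv (z : R[i]) : cmod z^-1 = (cmod z)^-1.
Proof. exact: ComplexField.Normc.normcV. Qed.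

Lemma Phi_norm m y : (L <= m)%N -> cmod (Phi m y) = 1.
Proof.
move=> Lm; rewrite /Phi cmodM cmod_inv cmodR Heq ger0_norm ?Pm_ge0 // divff //.
by rewrite gt_eqF // (Pm_pos_L PL x y Lm).
Qed.

Lemma cmod0 : cmod (0 : R[i]) = 0.
Proof. by rewrite /cmod /ComplexField.Normc.normc /= expr0n /= addr0 sqrtr0. Qed.

Lemma Phi_neq0 m y : (L <= m)%N -> Phi m y != 0.
Proof.
by move=> Lm; apply/negP => /eqP E; have := Phi_norm y Lm; rewrite E cmod0 => /eqP; rewrite eq_sym oner_eq0.
Qed.

Lemma Qt_Phi m y : (L <= m)%N -> Qt t m x y = (Pm m x y)%:C * Phi m y.
Proof. by move=> Lm; rewrite /Phi mulrC divfK // PmC_neq0. Qed.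

Lemma Phi_edge m y z : (L <= m)%N -> 0 < P y z -> Phi m.+1 z = e z * Phi m y.
Proof.
move=> Lm Pyz.
pose F w := Qt t m x w * kt t w z.
have HQ : Qt t m.+1 x z = \sum_w F w by rewrite /Qt QkSr.
have HF w : `|F w| = (Pm m x w * P w z)%:C.
  by rewrite -cmodE /F cmodM cmod_kt Heq.
have Hn : `|\sum_(w | xpredT w) F w| = \sum_(w | xpredT w) `|F w|.
  rewrite -HQ -cmodE Heq /Pm QkSr rmorph_sum /=.
  by apply: eq_bigr => w _; rewrite HF.
have [u u1 Hu] := normC_sum_eq Hn.
have Hsum : Qt t m.+1 x z = (Pm m.+1 x z)%:C * u.
  rewrite HQ; under eq_bigr => w _ do rewrite (Hu w isT).
  by rewrite -mulr_suml -Hn -cmodE -HQ Heq.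
have Lm1 : (L <= m.+1)%N by apply: leq_trans Lm _.
have -> : Phi m.+1 z = u.
  by apply: (mulfI (PmC_neq0 z Lm1)); rewrite -Qt_Phi.
have := Hu y isT; rewrite HF /F /kt Qt_Phi // rmorphM /=.
have Pz : (P y z)%:C != 0.
  by apply: realC_neq0; rewrite gt_eqF.
move=> E.
have E2 : (Pm m x y)%:C * (Phi m y * e z) = (Pm m x y)%:C * u.
  apply: (mulIf Pz); rewrite /e; move: E; rewrite !mulrA => ->; exact: mulrAC.
by rewrite mulrC; apply: (mulfI (PmC_neq0 y Lm)).
Qed.


Definition D m y := Phi m.+1 y / Phi m y.

Lemma D_edge m y z : (L <= m)%N -> 0 < P y z -> D m.+1 z = D m y.
Proof.
move=> Lm Pyz; have Lm1 : (L <= m.+1)%N by apply: leq_trans Lm _.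
rewrite /D (Phi_edge Lm1 Pyz) (Phi_edge Lm Pyz).
rewrite invfM mulrACA divff ?mul1r // /e; exact: expi_neq0.
Qed.

Lemma D_k k : forall w y m, (L <= m)%N -> 0 < Pm k w y -> D (m + k) y = D m w.
Proof.
elim: k => [|k IH] w y m Lm.
  rewrite /Pm /Qk /= /ind addn0; case: eqP => [->|_]; first by [].
  by rewrite ltxx.
rewrite /Pm QkS => /sum_gt0_ex [v /(mul_gt0_l (P_ge0 _ _) (Pm_ge0 _ _ _)) [Pwv Pv]].
rewrite addnS -addSn (IH v) //; first exact: D_edge Lm Pwv.
exact: leq_trans Lm _.
Qed.

Lemma D_L m y : (L <= m)%N -> D (m + L) y = D m x.
Proof. by move=> Lm; apply: D_k. Qed.

Lemma D_const z0 : 0 < P x z0 -> forall j y, D (L + L + j) y = D (L + L) x.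
Proof.
move=> Pz0; elim => [|j IH] y.
  by rewrite addn0 D_L // D_L.
have H1 : (L <= L + j.+1)%N by apply: leq_addr.
rewrite -addnA addnC D_L //.
rewrite -(D_L z0 H1) addnC addnA addnS (D_edge _ Pz0) ?IH //.
by rewrite -addnA leq_addr.
Qed.

Lemma Phi_pow z0 : 0 < P x z0 -> forall k y,
  Phi (L + L + k) y = D (L + L) x ^+ k * Phi (L + L) y.
Proof.
move=> Pz0; elim => [|k IH] y; first by rewrite addn0 expr0 mul1r.
rewrite addnS exprS -mulrA -IH -(D_const Pz0 k y) /D divfK //.
apply: Phi_neq0; rewrite -addnA leq_addr //.
Qed.

End Key.


Lemma key_gap t : t != 0 -> H1 P -> H3 P f ->
  forall x, exists m y, cmod (Qt t m x y) < Pm m x y.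
Proof.
move=> t0 [L [L1 HL]] H3 x; apply: contrapT => Hn.
have Heq m y : cmod (Qt t m x y) = Pm m x y.
  apply/eqP; rewrite eq_le Qt_le /= leNgt; apply/negP => H; apply: Hn; by exists m, y.
have PL w y : 0 < Pm L w y.
  apply: (HL (@ind _ R y)) => [z|]; first by rewrite /ind ler0n.
  by exists y; rewrite /ind eqxx oner_eq0.
have [z0 Pz0] : exists z, 0 < P x z by apply: sum_gt0_ex; rewrite P_sum ltr01.
have LL : (L <= L + L)%N by apply: leq_addr.
set c := D t x (L + L) x.
have cn : cmod c = 1.
  rewrite /c /D cmodM cmod_inv (Phi_norm PL Heq) ?(Phi_norm PL Heq) ?invr1 ?mulr1 //.
  exact: leq_trans LL _.
have [al Hal] := cmod1_expi cn.
have [n [xs [Hpos Hnot]]] := H3 (al / t) (pi *+ 2 / t).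
apply: Hnot.
have A0 : 0 <= \prod_(i < n) P (xs i) (xs i.+1) by apply: prodr_ge0 => i _; exact: P_ge0.
have [HA Hlast] := mul_gt0_l A0 (P_ge0 _ _) Hpos.
have Hedge i : (i < n)%N -> 0 < P (xs i) (xs i.+1).
  move=> lt; exact: (prod_factor_gt0 (fun j => P_ge0 _ _) HA (Ordinal lt)).
have W i : (i <= n)%N -> Phi t x (L + L + i) (xs i) =
    expi (t * \sum_(j < i) f (xs j.+1)) * Phi t x (L + L) (xs 0%N).
  elim: i => [|i IH] Hi; first by rewrite addn0 big_ord0 mulr0 expi0 mul1r.
  rewrite addnS (Phi_edge PL Heq _ (Hedge i Hi)); last by apply: leq_trans LL (leq_addr _ _).
  rewrite IH ?(ltnW Hi) // mulrA expiD big_ord_recr /= mulrDr addrC.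
  by [].
have F1 := Phi_edge PL Heq (m := L + L + n) (leq_trans LL (leq_addr _ _)) Hlast.
rewrite W // mulrA expiD -addnS (Phi_pow PL Heq Pz0) -/c Hal expiX in F1.
have F2 := mulIf (Phi_neq0 PL Heq (xs 0%N) LL) F1.
set S := \sum_(i < n.+1) f (xs i).
have ES : t * S = t * f (xs 0%N) + t * \sum_(j < n) f (xs j.+1).
  by rewrite /S big_ord_recl /= mulrDr.
have E1 : expi (t * S - al *+ n.+1) = 1.
  by rewrite -expiD ES -F2 expiD subrr expi0.
have [k Ek] := cos_eq1 (expi_eq1 E1).
exists k.
apply: (mulfI t0).
have -> : t * (pi *+ 2 / t * k%:~R) = pi *+ 2 * k%:~R by field.
rewrite -Ek; field.
exact: t0.
Qed.


Lemma rho_lt1 t m x y : cmod (Qt t m x y) < Pm m x y -> rho t m x < 1.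
Proof.
move=> H; rewrite /rho -(Pm_sum m x) (bigD1 y) //= [X in _ < X](bigD1 y) //=.
by apply: ltr_leD => //; apply: ler_sum => z _; apply: Qt_le.
Qed.

Lemma gap_M t : t != 0 -> H1 P -> H3 P f ->
  exists M q, [/\ (1 <= M)%N, q < 1 & forall x, rho t M x <= q].
Proof.
move=> t0 h1 h3.
have Hx x : exists m, rho t m x < 1.
  have [m [y Hy]] := key_gap t0 h1 h3 x; exists m; exact: rho_lt1 Hy.
have [mx Hmx] := choice Hx.
set M := (\big[maxn/0%N]_(x : X) mx x).+1.
have HM x : (mx x <= M)%N.
  by rewrite /M (bigD1 x) //=; apply: leq_trans (leq_maxl _ _) (leqnSn _).
have M1 : (1 <= M)%N by [].
have Hr x : rho t M x < 1.
  rewrite -(subnKC (HM x)); apply: le_lt_trans (rho_mono _ _ _ _) _; exact: Hmx.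
exists M, (\big[Num.max/0]_(x : X) rho t M x); split => //.
  by apply: (big_ind (fun v => v < 1)) => // a b Ha Hb; rewrite gt_max Ha.
by move=> x; rewrite (bigD1 x) //= le_max lexx.
Qed.

End Main.

Section Final.
Variable R : realType.

Lemma sup_le_B (A : set R) B : 0 <= B -> (forall r, A r -> r <= B) -> sup A <= B.
Proof.
move=> B0 H; case: (pselect (A !=set0)) => [ne|e].
  by apply: ge_sup ne _ => r Ar; exact: H.
have -> : A = set0.
  by apply/seteqP; split => x // Ax; exfalso; apply: e; exists x.
by rewrite sup0.
Qed.

Lemma powr_le (a b : R) k : 0 <= a -> a <= b -> a ^+ k <= b ^+ k.
Proof.
move=> a0 ab; elim: k => [|k IH]; first by rewrite !expr0.
by rewrite !exprS; apply: ler_pM => //; exact: exprn_ge0.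
Qed.

Lemma le_bigmax_seqR (I : eqType) (s : seq I) (F : I -> R) x :
  x \in s -> F x <= \big[Num.max/0]_(i <- s) F i.
Proof.
elim: s => [//|a s IH]; rewrite in_cons big_cons => /orP[/eqP ->|xs].
  by rewrite le_max lexx.
by rewrite le_max IH // orbT.
Qed.

Lemma bigmax_ge0 (I : Type) (s : seq I) (F : I -> R) :
  0 <= \big[Num.max/0]_(i <- s) F i.
Proof.
elim: s => [|a s IH]; first by rewrite big_nil.
by rewrite big_cons le_max IH orbT.
Qed.

Lemma bigmax_lt1 (I : eqType) (s : seq I) (F : I -> R) :
  (forall i, i \in s -> F i < 1) -> \big[Num.max/0]_(i <- s) F i < 1.
Proof.
elim: s => [|a s IH] H; first by rewrite big_nil ltr01.
rewrite big_cons gt_max H ?mem_head //= IH // => i Hi; apply: H.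
by rewrite in_cons Hi orbT.
Qed.

Lemma cmod_gt0 (z : R[i]) : z != 0 -> 0 < cmod z.
Proof.
move=> z0; rewrite lt_def cmod_ge0 andbT; apply/negP => /eqP E.
by move: z0; rewrite (ComplexField.Normc.eq0_normc E) eqxx.
Qed.

Lemma opnorm_le (X : finType) (Op : (X -> R[i]) -> (X -> R[i])) B : 0 <= B ->
  (forall g, supnorm (Op g) <= B * supnorm g) -> opnorm Op <= B.
Proof.
move=> B0 H; apply: sup_le_B => // r [g [[x gx] ->]].
have sg : 0 < supnorm g by apply: lt_le_trans (cmod_gt0 gx) (supnorm_ge _ _).
by rewrite ler_pdivrMr.
Qed.

End Final.

Unset Implicit Arguments.
Theorem lemma4p2 (R : realType) (X : finType) (P : X -> X -> R) (f : X -> R) :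
  markov_matrix P -> H1 P -> H3 P f ->
  forall K : set R, compact K -> K `<=` [set t | t != 0] ->
  exists cK cK' : R, 0 < cK /\ 0 < cK' /\
    forall n : nat, (1 <= n)%N ->
      sup [set opnorm (iter n (Pt P f t)) | t in K] <= cK * expR (- (cK' * n%:R)).
Proof.
move=> HP h1 h3 K cK K0.
have Hmq t : exists mq : nat * R, t != 0 ->
    [/\ (1 <= mq.1)%N, mq.2 < 1 & forall x, rho P f t mq.1 x <= mq.2].
  have [->|t0] := eqVneq t 0; first by exists (0%N, 0).
  have [M [q H]] := gap_M HP t0 h1 h3; by exists (M, q).
have [mq Hmq'] := choice Hmq.
pose Cst t := ((mq t).1%:R * (2 * Fsum f)) *+ #|X| + 1.
have Cst0 t : 0 < Cst t.
  rewrite /Cst ltr_pwDr // mulrn_wge0 // mulr_ge0 // mulr_ge0 //; exact: Fsum_ge0.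
pose rad t := (1 - (mq t).2) / (2 * Cst t).
have rad0 t : K t -> 0 < rad t.
  move=> Kt; have [_ q1 _] := Hmq' t (K0 t Kt).
  by rewrite /rad divr_gt0 ?subr_gt0 // mulr_gt0.
rewrite compact_cover in cK.
have Hc : K `<=` cover K (fun t => ball t (rad t)).
  by move=> t Kt; exists t => //; apply: ballxx; exact: rad0.
have [D' subD cov] := cK R K (fun t => ball t (rad t)) (fun i _ => ball_open _ _) Hc.
have subK i : i \in finmap.enum_fset D' -> K i.
  by move=> Di; have := subD i Di; rewrite in_setE.
pose Mb := (\max_(i <- finmap.enum_fset D') (mq i).1)%N.+1.
pose qb := \big[Num.max/0]_(i <- finmap.enum_fset D') ((1 + (mq i).2) / 2).
have qb0 : 0 <= qb := bigmax_ge0 _ _.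
have qb1 : qb < 1.
  apply: bigmax_lt1 => i Di; have [_ q1 _] := Hmq' i (K0 i (subK i Di)).
  by rewrite ltr_pdivrMr // mul1r -ltrBrDl; rewrite -[X in X - 1]/(1 + 1) addrK.
pose a := 1 - qb.
have a0 : 0 < a by rewrite subr_gt0.
exists (expR a), (a / Mb%:R); split; first exact: expR_gt0.
split; first by rewrite divr_gt0.
move=> n n1; apply: sup_le_B; first by rewrite mulr_ge0 // ltW // expR_gt0.
move=> r [t Kt <-].
have [i Di Bi] := cov t Kt.
have Ki : K i by apply: subK.
have [M1 q1 Hr] := Hmq' i (K0 i Ki).
rewrite -ball_normE /ball_ /= in Bi.
have Hrho x : rho P f t (mq i).1 x <= qb.
  apply: le_trans (rho_lip f HP t i _ x) _.
  apply: le_trans (_ : (mq i).2 + (1 - (mq i).2) / 2 <= _).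
    apply: lerD; first exact: Hr.
    rewrite -mulrnAl mulrA.
    apply: le_trans (_ : Cst i * `|t - i| <= _).
      by apply: ler_wpM2r; [exact: normr_ge0 | rewrite /Cst mulrnAl lerDl ler01].
    apply: le_trans (_ : Cst i * rad i <= _).
      by apply: ler_wpM2l; [exact: ltW | rewrite distrC ltW].
    have C0 : Cst i != 0 by rewrite gt_eqF.
    by rewrite /rad mulrCA invfM [2^-1 / _]mulrC (mulrA (Cst i)) mulfV // mul1r.
  apply: le_trans (le_bigmax_seqR (fun j => (1 + (mq j).2) / 2) Di).
  by rewrite le_eqVlt; apply/orP; left; apply/eqP; field.
apply: opnorm_le => [|g]; first by rewrite mulr_ge0 // ltW // expR_gt0.
apply: le_trans (iter_geom HP g n qb0 Hrho) _.
apply: ler_wpM2r; first exact: supnorm_ge0.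
set k := (n %/ (mq i).1)%N.
have qbe : qb <= expR (- a).
  by have := expR_ge1Dx (- a); rewrite /a opprB addrCA subrr addr0.
apply: le_trans (powr_le k qb0 qbe) _.
rewrite -expRM_natl -expRD ler_expR.
have Hn : (n <= k.+1 * Mb)%N.
  apply: leq_trans (ltnW (ltn_ceil n M1)) _; rewrite leq_mul2l; apply/orP; right.
  by apply: leq_trans (leqnSn _); apply: leq_bigmax_seq.
have Hn' : n%:R <= k.+1%:R * Mb%:R :> R by rewrite -natrM ler_nat.
have Mb0 : 0 < Mb%:R :> R by rewrite ltr0n.
have : a / Mb%:R * n%:R <= a * k.+1%:R.
  rewrite mulrAC ler_pdivrMr // -mulrA ler_wpM2l //; first exact: ltW.
rewrite -addn1 natrD; lra.
Qed.
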